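(* For all integers $n \geq 1$ and $i \geq 1$, the number of partitions of $n$ whose smallest part is exactly $i$ equals $$\sum_{s=1}^{i} (-1)^{s-1} \sum_{\pi \in U_{s,i}} p(n - |\pi|).$$
   Context: $p(m)$ is the number of partitions of $m$, with $p(0)=1$ and $p(m)=0$ for $m<0$. $U_{s,i}$ denotes the set of partitions into exactly $s$ distinct parts whose largest part equals $i$, and $|\pi|$ denotes the sum of the parts of $\pi$. *)

(* Defs.v *)
From mathcomp Require Import all_boot all_order all_algebra.
Set Implicit Arguments. Unset Strict Implicit. Unset Printing Implicit Defensive.
Import GRing.Theory Num.Theory.

Definition is_partition (n : nat) (l : seq nat) : bool :=
  [&& all (fun x => 0 < x) l, sorted geq l & sumn l == n].

(* Partitions of n (every partition of n has at most n parts, each <= n),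
   enumerated as k-tuples of 'I_(n+1) for k <= n. *)
Definition partitions_of (n : nat) : seq (seq nat) :=
  flatten [seq [seq l <- [seq map val (tval t) | t <- enum {: k.-tuple 'I_n.+1}]
                      | is_partition n l]
          | k <- iota 0 n.+1].

Definition npart (m : int) : nat :=
  match m with
  | Posz k => size (partitions_of k)
  | Negz _ => 0
  end.

(* smallest part of a nonempty partition (last part, as parts are nonincreasing) *)
Definition smallest_part (l : seq nat) : nat := last 0 l.

(* U_{s,i}: partitions into exactly s distinct parts with largest part i,
   listed as strictly decreasing s-tuples of parts in 'I_(i+1). *)
Definition U (s i : nat) : seq (seq nat) :=
  [seq l <- [seq map val (tval t) | t <- enum {: s.-tuple 'I_i.+1}]
     | [&& all (fun x => 0 < x) l, sorted gtn l & head 0 l == i]].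

(* Main.v *)
Require Import Defs.
From mathcomp Require Import all_boot all_order all_algebra.
From mathcomp Require Import zify.
Import GRing.Theory Num.Theory.
Set Implicit Arguments. Unset Strict Implicit.

Lemma mem_TL k N l : (l \in [seq map val (tval t) | t <- enum {: k.-tuple 'I_N.+1}]) = (size l == k) && all (fun x => x <= N) l.
Proof.
apply/mapP/idP.
- move=> [t _ ->]; rewrite size_map size_tuple eqxx /=.
  by apply/allP => x /mapP [y _ ->]; rewrite -ltnS.
- case/andP => /eqP sz /allP H.
  have sz': size (map (fun x => inord x : 'I_N.+1) l) == k by rewrite size_map sz.
  exists (Tuple sz'); first by rewrite mem_enum.
  rewrite /= -map_comp map_id_in // => x /H xN /=; rewrite inordK // ltnS.
Qed.

Lemma uniq_TL k N : uniq [seq map val (tval t) | t <- enum {: k.-tuple 'I_N.+1}].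
Proof.
rewrite map_inj_uniq ?enum_uniq // => t1 t2 /(inj_map val_inj) /val_inj //.
Qed.

Lemma mem_sumn (l : seq nat) x : x \in l -> x <= sumn l.
Proof.
elim: l => //= y l IH; rewrite in_cons => /orP [/eqP -> | /IH]; lia.
Qed.

Lemma part_bound n l : is_partition n l -> (size l <= n) && all (fun x => x <= n) l.
Proof.
case/and3P => pos _ /eqP <-; apply/andP; split.
- elim: l pos => //= x l IH /andP [x0 /IH]; lia.
- by apply/allP => x /mem_sumn.
Qed.

Lemma mem_partitions n l : (l \in partitions_of n) = is_partition n l.
Proof.
apply/flatten_mapP/idP.
- by move=> [k _]; rewrite mem_filter => /andP [].
- move=> H; have /andP [sz al] := part_bound H.
  exists (size l); first by rewrite mem_iota /= add0n ltnS.
  by rewrite mem_filter H mem_TL eqxx al.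
Qed.

Lemma uniq_partitions n : uniq (partitions_of n).
Proof.
rewrite /partitions_of; elim: (iota 0 n.+1) (iota_uniq 0 n.+1) => //= k s IH /andP [ks us].
rewrite cat_uniq IH // filter_uniq ?uniq_TL //= andbT.
apply/hasPn => l /flatten_mapP [k' k's]; rewrite !mem_filter mem_TL => /andP [_ /andP [/eqP szl _]].
rewrite mem_TL szl; apply/negP => /and3P [_ /eqP e _]; by move: ks; rewrite -e k's.
Qed.

Lemma card_bij (T U : eqType) (A : seq T) (B : seq U) (f : T -> U) :
  uniq A -> uniq B -> {in A &, injective f} -> (forall x, x \in A -> f x \in B) ->
  (forall y, y \in B -> exists2 x, x \in A & y = f x) -> size A = size B.
Proof.
move=> uA uB inj fAB surj; rewrite -(size_map f); apply: perm_size.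
apply: uniq_perm; first by rewrite map_inj_in_uniq.
  done.
move=> y; apply/mapP/idP => [[x xA ->]|/surj [x xA ->]]; [exact: fAB | by exists x].
Qed.

Lemma path_last_min x s : path geq x s -> all (fun y => last x s <= y) (x :: s).
Proof.
elim: s x => [|y s IH] x /=; first by rewrite leqnn.
case/andP => yx /IH /= /andP [ly ->]; rewrite ly !andbT; exact: leq_trans ly yx.
Qed.

Lemma sorted_rcons_geq l m : all (fun x => m <= x) l -> sorted geq l -> sorted geq (rcons l m).
Proof.
case: l => //= x s al ps; rewrite rcons_path ps /=.
have : all (fun y => m <= y) (x :: s) by [].
by move/allP; apply; exact: mem_last.
Qed.

Lemma sorted_rcons_inv (l : seq nat) m : sorted geq (rcons l m) -> sorted geq l.
Proof. by case: l => //= y b; rewrite rcons_path => /andP []. Qed.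

Lemma core m n : 1 <= m -> m <= n ->
  size [seq l <- partitions_of (n - m) | all (fun x => m <= x) l] =
  size [seq l <- partitions_of n | all (fun x => m <= x) l && (m \in l)].
Proof.
move=> m1 mn; apply: (card_bij (f := fun l => rcons l m)).
- by rewrite filter_uniq ?uniq_partitions.
- by rewrite filter_uniq ?uniq_partitions.
- by move=> x y _ _; apply: rcons_injl.
- move=> l; rewrite !mem_filter !mem_partitions => /andP [al /and3P [pos srt /eqP sm]].
  rewrite all_rcons al mem_rcons mem_head andbT /= /is_partition all_rcons pos.
  rewrite sorted_rcons_geq // sumn_rcons sm subnK // eqxx andbT /=; lia.
- move=> l; rewrite mem_filter mem_partitions => /andP [/andP [al ml] /and3P [pos srt /eqP sm]].
  case: l ml al pos srt sm => // x s ml al pos srt sm.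
  have lm : last x s = m.
    apply/eqP; rewrite eqn_leq; apply/andP; split.
      by apply: (allP (path_last_min srt)).
    by apply: (allP al); exact: mem_last.
  move: al pos srt sm; rewrite lastI lm all_rcons => /andP [_ al] /[dup] pos.
  rewrite all_rcons => /andP [_ pos'] srt; rewrite sumn_rcons => sm.
  exists (belast x s) => //.
  rewrite mem_filter mem_partitions al /is_partition pos' (sorted_rcons_inv srt) /=.
  by apply/eqP; rewrite -sm addnK.
Qed.

Lemma count_split (T : Type) (P Q R : pred T) (s : seq T) :
  (forall x, (P x : nat) = Q x + R x) -> count P s = count Q s + count R s.
Proof. move=> H; elim: s => //= x s ->; rewrite H; lia. Qed.

Lemma split_ge m N :
  size [seq l <- partitions_of N | all (fun x => m <= x) l] =
  size [seq l <- partitions_of N | all (fun x => m.+1 <= x) l] +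
  size [seq l <- partitions_of N | all (fun x => m <= x) l && (m \in l)].
Proof.
rewrite !size_filter; apply: count_split => l /=.
case: (boolP (all (fun x => m.+1 <= x) l)) => H1.
  have -> : all (fun x => m <= x) l by apply/allP => x /(allP H1); lia.
  suff -> : (m \in l) = false by [].
  by apply/negP => /(allP H1); rewrite ltnn.
case: (boolP (all (fun x => m <= x) l)) => H2 //=.
have [x xl xm] := allPn H1.
have mx : m <= x by apply: (allP H2).
have xm' : x = m by move: xm => /=; lia.
by rewrite -xm' xl.
Qed.

Lemma zero_case m N : N < m ->
  size [seq l <- partitions_of N | all (fun x => m <= x) l && (m \in l)] = 0.
Proof.
move=> Nm; rewrite size_filter; apply/eqP; rewrite -leqn0 leqNgt -has_count.
apply/hasPn => l; rewrite mem_partitions => /and3P [_ _ /eqP sm].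
apply/negP => /andP [_ /mem_sumn]; lia.
Qed.

Lemma smallest_eq n i l : 1 <= i -> is_partition n l ->
  (smallest_part l == i) = all (fun x => i <= x) l && (i \in l).
Proof.
move=> i1 /and3P [_ srt _]; case: l srt => [|x s] srt; first by rewrite /smallest_part in_nil andbF; case: i i1.
rewrite /smallest_part /=; apply/eqP/andP => [<-|[al ml]].
  by split; [exact: path_last_min | exact: mem_last].
apply/eqP; rewrite eqn_leq; apply/andP; split.
  by apply: (allP (path_last_min srt)).
by apply: (allP (al : all (fun y => i <= y) (x :: s))); exact: mem_last.
Qed.

Local Open Scope ring_scope.

Definition Cz (N : int) (m : nat) : int :=
  match N with
  | Posz k => (size [seq l <- partitions_of k | all (fun x => m <= x)%N l])%:Z
  | Negz _ => 0
  end.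

Lemma Cz_neg (N : int) m : N < 0 -> Cz N m = 0.
Proof. by case: N. Qed.

Lemma Cz_rec (N : int) m : (1 <= m)%N -> Cz N m = Cz N m.+1 + Cz (N - m%:Z) m.
Proof.
move=> m1; case: N => [k|k]; last first.
  by rewrite /= Cz_neg ?add0r //; lia.
case: (leqP m k) => mk.
  rewrite subzn // /= split_ge core // PoszD //.
rewrite (@Cz_neg (k%:Z - m%:Z)); last by lia.
by rewrite /= split_ge zero_case // addn0 addr0.
Qed.

Lemma Cz1 (N : int) : Cz N 1 = (npart N)%:Z.
Proof.
case: N => [k|k] //=.
rewrite (eq_in_filter (a2 := predT)) ?filter_predT //.
by move=> l; rewrite mem_partitions => /and3P [].
Qed.

Fixpoint WA (m : nat) : seq (seq nat) :=
  if m is m'.+1 then WA m' ++ map (cons m) (WA m') else [:: [::]].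

Definition T (m : nat) (N : int) : int :=
  \sum_(t <- WA m) (-1) ^+ size t * (npart (N - (sumn t)%:Z))%:Z.

Lemma T0 N : T 0 N = (npart N)%:Z.
Proof. by rewrite /T /= big_seq1 expr0 mul1r subr0. Qed.

Lemma TS m N : T m.+1 N = T m N - T m (N - m.+1%:Z).
Proof.
rewrite /T /= big_cat big_map /= -sumrN; congr (_ + _).
apply: eq_bigr => t _; rewrite exprS mulN1r mulNr; congr (- (_ * (npart _)%:Z)).
by rewrite PoszD opprD addrA.
Qed.

Lemma Cz_T m (N : int) : Cz N m.+1 = T m N.
Proof.
elim: m N => [|m IH] N; first by rewrite Cz1 T0.
by rewrite TS -!IH (Cz_rec N (m := m.+1)) // addrK.
Qed.

Lemma mem_map_cons (a x : nat) t (W : seq (seq nat)) :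
  (x :: t \in map (cons a) W) = (x == a) && (t \in W).
Proof.
apply/mapP/andP => [[t' t'W [-> ->]]|[/eqP -> tW]]; first by rewrite eqxx.
by exists t.
Qed.

Lemma gtn_trans : transitive gtn.
Proof. move=> a b c /=; lia. Qed.

Lemma path_gtn x t : (0 < x)%N -> path gtn x t = ((head 0 t < x)%N && sorted gtn t).
Proof. by move=> x0; case: t => [|y t'] /=; rewrite ?x0. Qed.

Lemma path_gtn_all x t : path gtn x t -> all (fun y => y <= x)%N t.
Proof.
move/(order_path_min gtn_trans)/allP => H; apply/allP => y /H /=; lia.
Qed.

Lemma mem_WA m t :
  (t \in WA m) = [&& sorted gtn t, all (fun x => 0 < x)%N t & (head 0 t <= m)%N].
Proof.
elim: m t => [|m IH] t.
  case: t => [|x s] //; rewrite inE; case: x => [|x]; rewrite /= ?andbF ?andFb ?andbF //.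
rewrite /= mem_cat IH; case: t => [|x s] //.
rewrite mem_map_cons IH.
case: s => [|y s] /=.
  lia.
case: (path _ y s); case: (all _ s); lia.
Qed.

Lemma uniq_WA m : uniq (WA m).
Proof.
elim: m => //= m IH; rewrite cat_uniq IH map_inj_uniq //=; last by move=> a b [].
rewrite IH andbT; apply/hasPn => t /mapP [t' _ ->]; rewrite mem_WA /=; lia.
Qed.

Lemma size_WA m t : t \in WA m -> (size t <= m)%N.
Proof.
rewrite mem_WA => /and3P [srt pos hd]; apply: leq_trans hd.
elim: t srt pos => //= x s IH srt /andP [x0 pos].
rewrite path_gtn // in srt; case/andP: srt => hs srt.
have := IH srt pos; case: s {IH srt pos} hs => [|y s] /=; lia.
Qed.

Lemma U_perm k j :
  perm_eq (U k.+1 j.+1) (map (cons j.+1) [seq t <- WA j | size t == k]).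
Proof.
apply: uniq_perm.
- by rewrite filter_uniq ?uniq_TL.
- by rewrite map_inj_uniq ?filter_uniq ?uniq_WA // => a b [].
move=> l; rewrite mem_filter mem_TL; case: l => [|x t]; first by apply/idP/idP => [/and3P [_ //]| /mapP [? _ //]].
rewrite (mem_map_cons j.+1) mem_filter mem_WA /=.
case: (eqVneq x j.+1) => [->|nx]; last by rewrite ?andbF ?andFb.
have := @path_gtn_all j.+1 t; rewrite path_gtn // eqSS leqnn /=.
case: (sorted gtn t); case: (all _ t); case: (size t == k); case: (all (fun x => x <= j.+1)%N t); rewrite /=; lia.
Qed.

Lemma LHS_eq n i : (1 <= i)%N ->
  (size [seq l <- partitions_of n | smallest_part l == i])%:Z = Cz (n%:Z - i%:Z) i.
Proof.
move=> i1.
rewrite (eq_in_filter (a2 := fun l => all (fun x => i <= x)%N l && (i \in l))); last first.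
  by move=> l; rewrite mem_partitions; apply: smallest_eq.
case: (leqP i n) => inn.
  by rewrite subzn //= -core.
by rewrite Cz_neg ?zero_case //; lia.
Qed.

Lemma sum_sizes j (G : nat -> seq nat -> int) :
  \sum_(0 <= s < j.+1) \sum_(t <- WA j | size t == s) G s t =
  \sum_(t <- WA j) G (size t) t.
Proof.
rewrite (exchange_big_dep predT) //=.
rewrite big_seq_cond [RHS]big_seq_cond; apply: eq_bigr => t /andP [tW _].
rewrite -big_filter (@eq_filter _ _ (pred1 (size t))); last by move=> s /=; rewrite eq_sym.
rewrite filter_pred1_uniq ?iota_uniq ?big_seq1 //.
by rewrite mem_index_iota /= ltnS size_WA.
Qed.

Theorem mainTheorem4 (n i : nat) (hn : (1 <= n)%N) (hi : (1 <= i)%N) :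
  (size [seq l <- partitions_of n | smallest_part l == i])%:Z =
  \sum_(1 <= s < i.+1)
     (-1) ^+ s.-1 * \sum_(pi <- U s i) (npart (n%:Z - (sumn pi)%:Z))%:Z.
Proof.
rewrite LHS_eq //; case: i hi => // j _.
rewrite Cz_T big_add1 /=.
rewrite (eq_bigr (fun s => \sum_(t <- WA j | size t == s)
           (-1) ^+ s * (npart (n%:Z - (sumn (j.+1 :: t))%:Z))%:Z)); last first.
  move=> s _; rewrite (perm_big _ (U_perm s j)) big_map big_filter big_distrr //.
rewrite sum_sizes /T; apply: eq_bigr => t _ /=.
by rewrite PoszD opprD addrA.
Qed.
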